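(* Let $N\ge2$, $a\in\mathbb{R}$, $\alpha\in(0,1]$, $\sigma_r^2,\sigma_w^2\ge0$. Let $P$ be a symmetric, doubly stochastic $N\times N$ matrix with nonnegative entries and eigenvalues $-1<\lambda_N(P)\le\dots\le\lambda_2(P)<\lambda_1(P)=1$, and suppose $P$ is positive semi-definite. Let $i\neq j$ with $p_{ij}=\epsilon>0$, and let $P_{-\epsilon}=P+\epsilon(\mathbf e_i-\mathbf e_j)(\mathbf e_i-\mathbf e_j)^{\mathsf T}$ be the communication matrix obtained by removing the edge $\{i,j\}$ of weight $\epsilon$ (adding $\epsilon$ to $p_{ii}$ and $p_{jj}$). Assume $|a|<1/|\alpha|$ and that both $a(P-\alpha I_N)$ and $a(P_{-\epsilon}-\alpha I_N)$ have spectral radius less than $1$. For a symmetric matrix $M$ with eigenvalues $\lambda_1(M),\dots,\lambda_N(M)$ define $$\tilde{\mathrm{MSD}}(M,\alpha)=\frac{\sigma_r^2}{1-a^2(1-\alpha)^2}+\frac1N\sum_{k=1}^N\frac{a^2\alpha^2\sigma_w^2\lambda_k^2(M)}{1-a^2(\lambda_k(M)-\alpha)^2}.$$ Then $\tilde{\mathrm{MSD}}(P,\alpha)\le\tilde{\mathrm{MSD}}(P_{-\epsilon},\alpha)$.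
   Context: $\tilde{\mathrm{MSD}}(M,\alpha)$ is the steady-state mean square deviation per agent of the estimator $\tilde{x}_{i,t+1}=a(\sum_jm_{ij}\tilde{x}_{j,t}+\alpha(\sum_jm_{ij}y_{j,t}-\tilde{x}_{i,t}))$ for the model $x_{t+1}=ax_t+r_t$, $y_{i,t}=x_t+w_{i,t}$ with innovation variance $\sigma_r^2$ and observation-noise variance $\sigma_w^2$. $\mathbf e_i$ is the $i$-th standard basis vector of $\mathbb{R}^N$. *)

(* Defs.v *)
From mathcomp Require Import all_boot all_order all_algebra complex.
From mathcomp Require Import reals.
Set Implicit Arguments. Unset Strict Implicit. Unset Printing Implicit Defensive.
Import Order.TTheory GRing.Theory Num.Theory.
Local Open Scope ring_scope.

(* s is the list (with multiplicity) of the eigenvalues of M: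
   the characteristic polynomial of M splits as prod (X - x), x in s. *)
Definition is_spectrum (R : realType) (N : nat) (M : 'M[R]_N) (s : seq R) : Prop :=
  char_poly M = \prod_(x <- s) ('X - x%:P).

Definition spectral_radius_lt1 (R : realType) (N : nat) (A : 'M[R]_N) : Prop :=
  forall z : R[i], root (map_poly (fun x : R => (x%:C)%C) (char_poly A)) z -> `|z| < 1.

Definition symmetric_mx (R : realType) (N : nat) (M : 'M[R]_N) : Prop := M^T = M.

Definition doubly_stochastic (R : realType) (N : nat) (M : 'M[R]_N) : Prop :=
  (forall k l, 0 <= M k l) /\
  (forall k, \sum_l M k l = 1) /\ (forall l, \sum_k M k l = 1).

Definition psd (R : realType) (N : nat) (M : 'M[R]_N) : Prop :=
  forall v : 'cV[R]_N, 0 <= (v^T *m M *m v) 0 0.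

Definition evec (R : realType) (N : nat) (i : 'I_N) : 'cV[R]_N := delta_mx i 0.

Definition remove_edge (R : realType) (N : nat) (P : 'M[R]_N) (eps : R) (i j : 'I_N)
  : 'M[R]_N :=
  P + eps *: ((evec R i - evec R j) *m (evec R i - evec R j)^T).

(* MSD~ computed from the eigenvalue list s of M (N = size of matrix) *)
Definition MSDt (R : realType) (N : nat) (a alpha sr2 sw2 : R) (s : seq R) : R :=
  sr2 / (1 - a ^+ 2 * (1 - alpha) ^+ 2)
  + N%:R^-1 * \sum_(l <- s)
      (a ^+ 2 * alpha ^+ 2 * sw2 * l ^+ 2 / (1 - a ^+ 2 * (l - alpha) ^+ 2)).

(* Main.v *)
Require Import Defs.
From mathcomp Require Import all_boot all_order all_algebra complex.
From mathcomp Require Import reals.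
From mathcomp Require Import ring lra zify.
Import Order.TTheory GRing.Theory Num.Theory.
Local Open Scope ring_scope.
Local Open Scope sesquilinear_scope.
Set Implicit Arguments. Unset Strict Implicit.

Section Cx.
Variable C : numClosedFieldType.

Lemma trC_mul m n p (A : 'M[C]_(m,n)) (B : 'M[C]_(n,p)) : (A *m B)^t* = B^t* *m A^t*.
Proof. by rewrite trmx_mul map_mxM. Qed.

Lemma qform_diag n (U : 'M[C]_n) (d : 'rV[C]_n) (x : 'rV[C]_n) :
  (x *m (U^t* *m diag_mx d *m U) *m x^t*) 0 0 =
  \sum_k d 0 k * ((x *m U^t*) 0 k * ((x *m U^t*) 0 k)^*).
Proof.
have -> : x *m (U^t* *m diag_mx d *m U) *m x^t* =
   (x *m U^t*) *m diag_mx d *m (x *m U^t*)^t*.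
  by rewrite trC_mul trmxCK !mulmxA.
rewrite !mxE; apply: eq_bigr => k _.
rewrite mul_mx_diag !mxE; ring.
Qed.

Lemma norm_form n (U : 'M[C]_n) (x : 'rV[C]_n) : U^t* *m U = 1%:M ->
  (x *m x^t*) 0 0 = \sum_k ((x *m U^t*) 0 k * ((x *m U^t*) 0 k)^*).
Proof.
move=> hU.
have -> : x *m x^t* = (x *m U^t*) *m (x *m U^t*)^t*.
  by rewrite trC_mul trmxCK mulmxA -(mulmxA x) hU mulmx1.
by rewrite !mxE; apply: eq_bigr => k _; rewrite !mxE.
Qed.

Lemma rowsub_lemma n (U : 'M[C]_n) (S : {set 'I_n}) : U *m U^t* = 1%:M ->
  exists V : 'M[C]_(#|S|, n), (#|S| <= \rank V)%N /\
    forall x : 'rV[C]_n, (x <= V)%MS -> forall k, k \notin S -> (x *m U^t*) 0 k = 0.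
Proof.
move=> hU.
pose V : 'M[C]_(#|S|, n) := \matrix_(r, j) U (enum_val r) j.
have UU : forall a b, \sum_j U a j * (U b j)^* = (a == b)%:R.
  move=> a b; have := congr1 (fun M : 'M[C]_n => M a b) hU; rewrite !mxE => <-.
  by apply: eq_bigr => j _; rewrite !mxE.
have VU : forall r k, (V *m U^t*) r k = (enum_val r == k)%:R.
  move=> r k; rewrite !mxE -UU; apply: eq_bigr => j _; rewrite !mxE.
  by [].
exists V; split.
  have h1 : V *m V^t* = 1%:M.
    apply/matrixP => r s; rewrite !mxE -(inj_eq enum_val_inj) -UU.
    by apply: eq_bigr => j _; rewrite !mxE.
  have := mxrankM_maxl V (V^t*); rewrite h1 mxrank1; exact.
move=> x /submxP [z ->] k kS.
rewrite -mulmxA mxE; apply: big1 => r _; rewrite VU.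
have : enum_val r \in S by exact: enum_valP.
by case: eqP => [-> | _]; [rewrite (negbTE kS) | rewrite mulr0].
Qed.

Lemma spec_count n (A B UA UB : 'M[C]_n) (dA dB : 'rV[C]_n) (c : C) :
  UA *m UA^t* = 1%:M -> UA^t* *m UA = 1%:M -> A = UA^t* *m diag_mx dA *m UA ->
  UB *m UB^t* = 1%:M -> UB^t* *m UB = 1%:M -> B = UB^t* *m diag_mx dB *m UB ->
  (forall k, dA 0 k \is Num.real) -> (forall k, dB 0 k \is Num.real) ->
  c \is Num.real ->
  (forall x : 'rV_n, (x *m A *m x^t*) 0 0 <= (x *m B *m x^t*) 0 0) ->
  (#|[set k : 'I_n | (c <= dA 0 k)%R]| <= #|[set k : 'I_n | (c <= dB 0 k)%R]|)%N.
Proof.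
move=> hUA hUA' eA hUB hUB' eB rA rB rc hle.
set S := [set k | c <= dA 0 k]; set T := [set k | dB 0 k < c].
have [V [rV hV]] := rowsub_lemma S hUA.
have [W [rW hW]] := rowsub_lemma T hUB.
have cap0 : forall x : 'rV_n, (x <= V)%MS -> (x <= W)%MS -> x = 0.
  move=> x xV xW.
  set y := x *m UA^t*; set y' := x *m UB^t*.
  have qA : (x *m A *m x^t*) 0 0 = \sum_k dA 0 k * (y 0 k * (y 0 k)^*).
    by rewrite eA qform_diag.
  have qB : (x *m B *m x^t*) 0 0 = \sum_k dB 0 k * (y' 0 k * (y' 0 k)^*).
    by rewrite eB qform_diag.
  have nA := norm_form x hUA'; have nB := norm_form x hUB'.
  have h1 : c * (x *m x^t*) 0 0 <= (x *m A *m x^t*) 0 0.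
    rewrite qA nA mulr_sumr; apply: ler_sum => k _.
    case: (boolP (k \in S)) => kS.
    - apply: ler_wpM2r; first exact: mul_conjC_ge0.
      by move: kS; rewrite inE.
    - by rewrite /y hV // mul0r !mulr0.
  have h2 := hle x.
  have hnn : forall k, 0 <= (c - dB 0 k) * (y' 0 k * (y' 0 k)^*).
    move=> k; case: (boolP (k \in T)) => kT.
      apply: mulr_ge0; last exact: mul_conjC_ge0.
      by rewrite subr_ge0 ltW //; move: kT; rewrite inE.
    by rewrite /y' hW // mul0r mulr0.
  have h3 : \sum_k (c - dB 0 k) * (y' 0 k * (y' 0 k)^*) = 0.
    apply/eqP; rewrite eq_le; apply/andP; split; last first.
      by apply: sumr_ge0 => k _; exact: hnn.
    have -> : \sum_k (c - dB 0 k) * (y' 0 k * (y' 0 k)^*) =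
        c * (x *m x^t*) 0 0 - (x *m B *m x^t*) 0 0.
      rewrite nB qB mulr_sumr -sumrB; apply: eq_bigr => k _; ring.
    by rewrite subr_le0; exact: le_trans h1 h2.
  have y'0 : y' = 0.
    apply/rowP => k; rewrite [RHS]mxE.
    case: (boolP (k \in T)) => kT; first last.
      by rewrite /y' (hW x xW k kT).
    have := @psumr_eq0P _ _ _ _ (fun k _ => hnn k) h3 k isT.
    move/eqP; rewrite mulf_eq0 => /orP [|].
      by rewrite subr_eq0 => /eqP ck; move: kT; rewrite inE -ck ltxx.
    by rewrite mul_conjC_eq0 => /eqP.
  have : x = y' *m UB by rewrite /y' -mulmxA hUB' mulmx1.
  by rewrite y'0 mul0mx.
have capE : (V :&: W)%MS = 0.
  apply/eqP; rewrite -submx0; apply/rV_subP => x xVW.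
  rewrite (cap0 x) ?sub0mx //.
    exact: submx_trans xVW (capmxSl _ _).
  exact: submx_trans xVW (capmxSr _ _).
have hsum := mxrank_sum_cap V W.
rewrite capE mxrank0 addn0 in hsum.
have hcol := rank_leq_col (V + W)%MS.
have hc : (#|[set k : 'I_n | (c <= dB 0 k)%R]| + #|T|)%N = #|'I_n|.
  rewrite -(cardsC [set k : 'I_n | (c <= dB 0 k)%R]); congr (_ + _)%N.
  by apply: eq_card => k; rewrite !inE real_ltNge ?rB.
rewrite card_ord in hc.
rewrite -(leq_add2r #|T|) hc; apply: leq_trans (leq_add rV rW) _; rewrite -hsum; exact: hcol.
Qed.
End Cx.

Lemma char_poly_similar (F : fieldType) n (U D : 'M[F]_n) : U \in unitmx ->
  char_poly (invmx U *m D *m U) = char_poly D.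
Proof.
move=> hU; rewrite /char_poly /char_poly_mx.
set Vp := map_mx polyC (invmx U); set Up := map_mx polyC U.
have VU : Vp *m Up = 1%:M by rewrite -map_mxM mulVmx // map_mx1.
have -> : 'X%:M - map_mx polyC (invmx U *m D *m U) =
    Vp *m ('X%:M - map_mx polyC D) *m Up.
  rewrite !map_mxM mulmxBr mulmxBl -/Vp -/Up; congr (_ - _).
  by rewrite mul_mx_scalar -scalemxAl VU scalemx1.
by rewrite !det_mulmx mulrAC -det_mulmx VU det1 mul1r.
Qed.

Section Rc.
Variable R : rcfType.
Lemma spec_data n (M : 'M[R]_n) (s : seq R) : M^T = M ->
  char_poly M = \prod_(x <- s) ('X - x%:P) ->
  exists U : 'M[R[i]]_n, exists r : 'I_n -> R,
  [/\ U *m U^t* = 1%:M, U^t* *m U = 1%:M,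
      map_mx (real_complex R) M = U^t* *m diag_mx (\row_k (r k)%:C%C) *m U &
      perm_eq s [seq r k | k <- enum 'I_n]].
Proof.
move=> hsym hchar.
set Mc := map_mx (real_complex R) M.
have realMc : Mc \is a mxOver Num.real.
  apply/mxOverP => a b; rewrite mxE; apply/complex_realP; by eexists.
have symMc : Mc \is symmetricmx.
  by rewrite is_hermitianmxE expr0 scale1r map_mx_id // /Mc map_trmx hsym.
have /orthomx_spectralP eMc := symmetric_normalmx symMc realMc.
set U := spectralmx Mc in eMc; set d := spectral_diag Mc in eMc.
have Uu : U \is unitarymx by exact: spectral_unitarymx.
have hU1 : U *m U^t* = 1%:M by apply/unitarymxP.
have hU2 : U^t* *m U = 1%:M by rewrite -invmx_unitary // mulVmx // spectral_unit.
have hcd : char_poly Mc = \prod_(k < n) ('X - (d 0 k)%:P).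
  rewrite {1}eMc char_poly_similar ?spectral_unit //.
  rewrite char_poly_trig ?diag_mx_is_trig //; apply: eq_bigr => k _.
  by rewrite mxE eqxx mulr1n.
rewrite invmx_unitary // in eMc.
have hcs : char_poly Mc = \prod_(x <- map (real_complex R) s) ('X - x%:P).
  by rewrite /Mc -map_char_poly hchar map_prod_XsubC big_map.
have hperm : perm_eq (map (real_complex R) s) [seq d 0 k | k <- enum 'I_n].
  by apply: prod_XsubC_eq; rewrite -hcs hcd big_map big_enum.
have dreal : forall k, exists x, d 0 k = (x%:C)%C.
  move=> k; have : d 0 k \in map (real_complex R) s.
    by rewrite (perm_mem hperm) map_f // mem_enum.
  by case/mapP => x _ ->; exists x.
pose r k := complex.Re (d 0 k).
have dr : forall k, d 0 k = ((r k)%:C)%C by move=> k; rewrite /r; case: (dreal k) => x ->.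
exists U, r; split => //.
  rewrite eMc; congr (_ *m diag_mx _ *m _); apply/rowP => k; rewrite !mxE dr.
  by [].
apply: (perm_map_inj (@complexI R)); apply: (perm_trans hperm).
have E : [seq d 0 k | k <- enum 'I_n] = [seq ((r k)%:C)%C | k <- enum 'I_n].
  by apply: eq_map => k; rewrite dr.
by rewrite E map_comp.
Qed.
End Rc.

Section Comb.
Variable R : realDomainType.

Lemma seq_max (s : seq R) : s != [::] -> exists2 m, m \in s & all (fun x => x <= m) s.
Proof.
elim: s => // x s IH _; case: s IH => [|y s] IH.
  by exists x; rewrite ?mem_head //= lexx.
have [m ms hm] := IH isT.
case: (leP x m) => h.
  by exists m; [rewrite in_cons ms orbT | rewrite /= h; exact: hm].
exists x; first exact: mem_head.
apply/allP => z; rewrite in_cons => /orP [/eqP -> | zs]; first exact: lexx.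
by have := allP hm z zs; move=> hz; apply: le_trans hz (ltW h).
Qed.

Lemma sum_mono (D : pred R) (f : R -> R) (s t : seq R) :
  {in D &, forall x y, x <= y -> f x <= f y} ->
  all D s -> all D t -> size s = size t ->
  (forall c : R, (count (fun x => (c <= x)%R) s <= count (fun x => (c <= x)%R) t)%N) ->
  \sum_(x <- s) f x <= \sum_(x <- t) f x.
Proof.
move=> hf; have [n] := ubnP (size s); elim: n s t => // n IH s t.
case: (eqVneq s [::]) => [-> _ _ _ /esym/size0nil -> _|sne].
  by rewrite !big_nil.
move=> hsz Ds Dt hst hc.
have [m ms hm] := seq_max sne.
have c1 : (0 < count (fun x => (m <= x)%R) t)%N.
  apply: leq_trans (hc m); rewrite -has_count; apply/hasP; exists m => //.
have tne : t != [::] by case: (t) c1.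
have [M Mt hM] := seq_max tne.
have mM : m <= M.
  move: c1; rewrite -has_count => /hasP [z zt mz].
  exact: le_trans mz (allP hM z zt).
have ps := perm_to_rem ms; have pt := perm_to_rem Mt.
rewrite (perm_big _ ps) (perm_big _ pt) !big_cons.
apply: lerD.
  by apply: hf => //; [exact: (allP Ds) | exact: (allP Dt)].
apply: IH.
- by rewrite size_rem //; case: (s) sne hsz.
- by apply/allP => z /mem_rem zs; exact: (allP Ds).
- by apply/allP => z /mem_rem zt; exact: (allP Dt).
- by rewrite !size_rem // hst.
move=> c; have := hc c; rewrite (permP ps) (permP pt) /=.
case: (leP c m) => cm.
  by rewrite (le_trans cm mM) /=.
have -> : count (fun x => (c <= x)%R) (rem m s) = 0%N.
  apply/eqP; rewrite -leqn0 leqNgt -has_count; apply/hasP => -[z /mem_rem zs cz].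
  by have := allP hm z zs; move=> hz; move: (le_lt_trans (le_trans cz hz) cm); rewrite ltxx.
by [].
Qed.
End Comb.

Lemma g_mono (R : realFieldType) (a al K x y : R) : 0 <= K -> a^+2*al^+2 < 1 -> 0 <= al ->
  0 <= x -> x <= y -> a^+2*(x-al)^+2 < 1 -> a^+2*(y-al)^+2 < 1 ->
  K * x^+2 / (1 - a^+2*(x-al)^+2) <= K * y^+2 / (1 - a^+2*(y-al)^+2).
Proof.
move=> K0 h0 al0 x0 xy hx hy.
have Dx : 0 < 1 - a^+2*(x-al)^+2 by rewrite subr_gt0.
have Dy : 0 < 1 - a^+2*(y-al)^+2 by rewrite subr_gt0.
rewrite ler_pdivrMr // mulrAC ler_pdivlMr //.
rewrite -subr_ge0.
have -> : K * y ^+ 2 * (1 - a ^+ 2 * (x - al) ^+ 2) - K * x ^+ 2 * (1 - a ^+ 2 * (y - al) ^+ 2)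
  = K * (y - x) * ((x + y) * (1 - a^+2*al^+2) + 2 * (a^+2 * al * x * y)) by ring.
apply: mulr_ge0; first by apply: mulr_ge0 => //; rewrite subr_ge0.
apply: addr_ge0; first by apply: mulr_ge0; [lra | rewrite subr_ge0 ltW].
apply: mulr_ge0 => //; apply: mulr_ge0; last lra.
apply: mulr_ge0 => //; apply: mulr_ge0 => //; exact: sqr_ge0.
Qed.

Lemma card_count n (p : pred 'I_n) : #|[set k | p k]| = count p (enum 'I_n).
Proof. rewrite cardsE cardE /enum_mem -size_filter (@eq_filter _ (mem 'I_n) predT) // filter_predT.
by []. Qed.

Lemma spec_root (F : fieldType) n (M : 'M[F]_n) s l :
  char_poly M = \prod_(x <- s) ('X - x%:P) -> l \in s ->
  exists2 v : 'rV_n, v *m M = l *: v & v != 0.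
Proof. by move=> hc ls; apply/eigenvalueP; rewrite eigenvalue_root_char hc root_prod_XsubC. Qed.

Lemma eig_nonneg (R : realType) n (M : 'M[R]_n) s l : psd M ->
  char_poly M = \prod_(x <- s) ('X - x%:P) -> l \in s -> 0 <= l.
Proof.
move=> hM hc ls; have [v hv v0] := spec_root hc ls.
have := hM v^T; rewrite trmxK hv -scalemxAl mxE.
have pos : 0 < (v *m v^T) 0 0.
  have ge : forall k, 0 <= v 0 k * v^T k 0 by move=> k; rewrite mxE -expr2 sqr_ge0.
  rewrite lt_def; apply/andP; split; last by rewrite mxE; apply: sumr_ge0 => k _; exact: ge.
  apply/eqP; rewrite mxE => h0; move/eqP: v0; apply; apply/rowP => k.
  have := @psumr_eq0P _ _ _ _ (fun k _ => ge k) h0 k isT.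
  by rewrite mxE -expr2 => /eqP; rewrite sqrf_eq0 mxE => /eqP.
by rewrite pmulr_lge0.
Qed.

Lemma eig_rad (R : realType) n (M : 'M[R]_n) s l a al :
  spectral_radius_lt1 (a *: (M - al%:M)) ->
  char_poly M = \prod_(x <- s) ('X - x%:P) -> l \in s -> a^+2 * (l - al)^+2 < 1.
Proof.
move=> hr hc ls; have [v hv v0] := spec_root hc ls.
have ev : eigenvalue (a *: (M - al%:M)) (a * (l - al)).
  apply/eigenvalueP; exists v => //.
  by rewrite -scalemxAr mulmxBr hv mul_mx_scalar -scalerBl scalerA.
rewrite eigenvalue_root_char in ev.
have := hr _ (rmorph_root (real_complex R) ev).
set z := a * (l - al).
move=> h; have h1 := le_lt_trans (normc_ge_Re (z%:C)%C) h.
have : `|z| < 1 by rewrite -(@ltcR R) /=; exact: h1.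
rewrite ltr_norml => /andP [h2 h3].
rewrite -exprMn -/z; nra.
Qed.

Lemma sqform_ge0 (R : realType) m (z : 'M[R]_(1, m)) : 0 <= (z *m z^T) 0 0.
Proof. by rewrite mxE; apply: sumr_ge0 => k _; rewrite mxE -expr2 sqr_ge0. Qed.

Lemma remove_edge_sym (R : realType) n (P : 'M[R]_n) e i j :
  symmetric_mx P -> symmetric_mx (remove_edge P e i j).
Proof.
rewrite /symmetric_mx /remove_edge => hP.
by rewrite linearD linearZ /= trmx_mul trmxK hP.
Qed.

Lemma remove_edge_psd (R : realType) n (P : 'M[R]_n) e i j :
  psd P -> 0 <= e -> psd (remove_edge P e i j).
Proof.
rewrite /psd /remove_edge => hP e0 v.
set w := evec R i - evec R j.
rewrite mulmxDr mulmxDl mxE; apply: addr_ge0; first exact: hP.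
rewrite -scalemxAr -scalemxAl mxE; apply: mulr_ge0 => //.
have -> : v^T *m (w *m w^T) *m v = (v^T *m w) *m (v^T *m w)^T.
  by rewrite trmx_mul trmxK !mulmxA.
exact: sqform_ge0.
Qed.

Lemma real_mx_map (R : realType) m n (A : 'M[R]_(m, n)) :
  map_mx (real_complex R) A \is a mxOver Num.real.
Proof. by apply/mxOverP => a b; rewrite mxE; apply/complex_realP; eexists. Qed.

Lemma qform_cmp (R : realType) n (P : 'M[R]_n) e i j (x : 'rV[R[i]]_n) : 0 <= e ->
  (x *m map_mx (real_complex R) P *m x^t*) 0 0 <=
  (x *m map_mx (real_complex R) (remove_edge P e i j) *m x^t*) 0 0.
Proof.
move=> e0; rewrite /remove_edge.
set w := evec R i - evec R j.
set wc := map_mx (real_complex R) w.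
have ewc : map_mx (real_complex R) w^T = wc^T by rewrite map_trmx.
rewrite map_mxD map_mxZ map_mxM ewc.
rewrite mulmxDr mulmxDl [X in _ <= X]mxE lerDl.
rewrite -scalemxAr -scalemxAl mxE; apply: mulr_ge0; first by rewrite ler0c.
have hw : wc^t* = wc^T.
  by rewrite realmxC // /wc map_trmx real_mx_map.
have -> : x *m (wc *m wc^T) *m x^t* = (x *m wc) *m (x *m wc)^t*.
  by rewrite trmx_mul map_mxM hw !mulmxA.
rewrite mxE; apply: sumr_ge0 => k _; rewrite !mxE; exact: mul_conjC_ge0.
Qed.

Local Close Scope sesquilinear_scope.
Unset Implicit Arguments.

Theorem proposition2 (R : realType) (N : nat) (a alpha sr2 sw2 eps : R)
  (P : 'M[R]_N) (i j : 'I_N) (sP sQ : seq R) :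
  (2 <= N)%N ->
  0 < alpha -> alpha <= 1 ->
  0 <= sr2 -> 0 <= sw2 ->
  symmetric_mx P -> doubly_stochastic P ->
  is_spectrum P sP ->
  (forall l, l \in sP -> -1 < l <= 1) ->
  count_mem 1 sP = 1%N ->
  psd P ->
  i != j -> P i j = eps -> 0 < eps ->
  is_spectrum (remove_edge P eps i j) sQ ->
  `|a| < 1 / `|alpha| ->
  spectral_radius_lt1 (a *: (P - alpha%:M)) ->
  spectral_radius_lt1 (a *: (remove_edge P eps i j - alpha%:M)) ->
  MSDt N a alpha sr2 sw2 sP <= MSDt N a alpha sr2 sw2 sQ.
Proof.
move=> N2 al0 al1 sr0 sw0 hsym _ hP _ _ hpsd _ _ e0 hQ ha hrP hrQ.
have hsymQ := remove_edge_sym eps i j hsym.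
have hpsdQ := remove_edge_psd i j hpsd (ltW e0).
have [UP [rP [hU1 hU2 eP pP]]] := spec_data hsym hP.
have [UQ [rQ [hV1 hV2 eQ pQ]]] := spec_data hsymQ hQ.
have hcnt : forall c : R,
    (count (fun x => (c <= x)%R) sP <= count (fun x => (c <= x)%R) sQ)%N.
  move=> c; rewrite (permP pP) (permP pQ) !count_map -!enumT -!card_count.
  have H := spec_count (c := (c%:C)%C) hU1 hU2 eP hV1 hV2 eQ
    (fun k => ltac:(by rewrite mxE; apply/complex_realP; eexists))
    (fun k => ltac:(by rewrite mxE; apply/complex_realP; eexists))
    (ltac:(by apply/complex_realP; eexists))
    (fun x => qform_cmp P i j x (ltW e0)).
  apply: (leq_trans (eq_leq _)) (leq_trans H (eq_leq _)).
    by apply: eq_card => k; rewrite !inE mxE lecR.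
  by apply: eq_card => k; rewrite !inE mxE lecR.
rewrite /MSDt lerD2l; apply: ler_wpM2l; first by rewrite invr_ge0 ler0n.
have haa : a ^+ 2 * alpha ^+ 2 < 1.
  have h := ha; rewrite (gtr0_norm al0) ltr_pdivlMr // in h.
  have h0 : 0 <= `|a| by exact: normr_ge0.
  rewrite -(real_normK (num_real a)) -exprMn.
  have h1 : 0 <= `|a| * alpha by apply: mulr_ge0 => //; exact: ltW.
  move: h h1; set z := `|a| * alpha => h h1; nra.
apply: (@sum_mono _ (fun l => (0 <= l) && (a^+2 * (l - alpha)^+2 < 1))).
- move=> x y /andP [x0 hx] /andP [y0 hy] xy; apply: g_mono => //.
    by apply: mulr_ge0 => //; apply: mulr_ge0; exact: sqr_ge0.
  exact: ltW.
- apply/allP => l ls; rewrite (eig_nonneg hpsd hP ls).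
  exact: (eig_rad hrP hP ls).
- apply/allP => l ls; rewrite (eig_nonneg hpsdQ hQ ls).
  exact: (eig_rad hrQ hQ ls).
- by rewrite (perm_size pP) (perm_size pQ) !size_map.
- exact: hcnt.
Qed.
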